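(* Let $R\in\mathbb C^{n\times n}$ be such that $\tilde R=\frac12(R+R^* )$ is positive definite, and let $\bar R=\frac12(R-R^* )$. Then: (1) $R$ is invertible; (2) $\frac12(R^{-1}+(R^* )^{-1})$ is positive definite; (3) $\left(\frac{R+R^*}{2}\right)^{-1}\succcurlyeq\frac{R^{-1}+(R^* )^{-1}}{2}$; (4) $\frac{R+R^*}{2}\succcurlyeq\frac{R^*R^{-1}R^*+R(R^* )^{-1}R}{2}$; (5) for $-1\le\alpha\le1$ let $W_\alpha=\tilde R+\alpha\bar R$; then for all $\alpha,\beta\in[-1,1]$ with $|\alpha|\le|\beta|$, \[ \frac{W_\alpha^{-1}+(W_\alpha^* )^{-1}}{2}\succcurlyeq\frac{W_\beta^{-1}+(W_\beta^* )^{-1}}{2}. \]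
   Context: $M^*$ is the conjugate transpose. For Hermitian $X,Y$, $X\succcurlyeq Y$ means $X-Y$ is positive semidefinite. *)

(* Defs.v *)
From HB Require Import structures.
From mathcomp Require Import all_boot all_order all_algebra.
Set Implicit Arguments. Unset Strict Implicit. Unset Printing Implicit Defensive.
Import Order.TTheory GRing.Theory Num.Theory.
Local Open Scope ring_scope.

Definition ctmx (C : numClosedFieldType) (m n : nat) (M : 'M[C]_(m, n)) : 'M[C]_(n, m) :=
  (map_mx Num.conj M)^T.

Definition hermitianmx (C : numClosedFieldType) (n : nat) (M : 'M[C]_n) : Prop :=
  ctmx M = M.

Definition posdefmx (C : numClosedFieldType) (n : nat) (M : 'M[C]_n) : Prop :=
  hermitianmx M /\ forall v : 'cV[C]_n, v != 0 -> 0 < (ctmx v *m M *m v) 0 0.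

Definition psdmx (C : numClosedFieldType) (n : nat) (M : 'M[C]_n) : Prop :=
  hermitianmx M /\ forall v : 'cV[C]_n, 0 <= (ctmx v *m M *m v) 0 0.

Definition loewner_ge (C : numClosedFieldType) (n : nat) (X Y : 'M[C]_n) : Prop :=
  psdmx (X - Y).

(* Main.v *)
Require Import Defs.
From HB Require Import structures.
From mathcomp Require Import all_boot all_order all_algebra.
From mathcomp Require Import ring.
Import Order.TTheory GRing.Theory Num.Theory.
Local Open Scope ring_scope.

Set Implicit Arguments. Unset Strict Implicit. Unset Printing Implicit Defensive.
Local Notation hermitianmx := Defs.hermitianmx.
Section Infra.
Variable C : numClosedFieldType.

Lemma ctmxK m n (A : 'M[C]_(m,n)) : ctmx (ctmx A) = A.
Proof. by apply/matrixP=> i j; rewrite !mxE conjCK. Qed.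
Lemma ctmxD m n (A B : 'M[C]_(m,n)) : ctmx (A + B) = ctmx A + ctmx B.
Proof. by apply/matrixP=> i j; rewrite !mxE rmorphD. Qed.
Lemma ctmxN m n (A : 'M[C]_(m,n)) : ctmx (- A) = - ctmx A.
Proof. by apply/matrixP=> i j; rewrite !mxE rmorphN. Qed.
Lemma ctmxB m n (A B : 'M[C]_(m,n)) : ctmx (A - B) = ctmx A - ctmx B.
Proof. by rewrite ctmxD ctmxN. Qed.
Lemma ctmxZ m n (a : C) (A : 'M[C]_(m,n)) : ctmx (a *: A) = a^* *: ctmx A.
Proof. by apply/matrixP=> i j; rewrite !mxE rmorphM. Qed.
Lemma ctmxM m n p (A : 'M[C]_(m,n)) (B : 'M[C]_(n,p)) :
  ctmx (A *m B) = ctmx B *m ctmx A.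
Proof. by rewrite /ctmx map_mxM trmx_mul. Qed.
Lemma ctmx1 n : ctmx (1%:M : 'M[C]_n) = 1%:M.
Proof. by rewrite /ctmx map_mx1 trmx1. Qed.
Lemma ctmx0 m n : ctmx (0 : 'M[C]_(m,n)) = 0.
Proof. by apply/matrixP=> i j; rewrite !mxE rmorph0. Qed.
Lemma ctmxV n (A : 'M[C]_n) : ctmx (invmx A) = invmx (ctmx A).
Proof. by rewrite /ctmx map_invmx trmx_inv. Qed.
Lemma unitmx_ct n (A : 'M[C]_n) : (ctmx A \in unitmx) = (A \in unitmx).
Proof. by rewrite /ctmx unitmx_tr map_unitmx. Qed.

Lemma invmxM n (A B : 'M[C]_n) : A \in unitmx -> B \in unitmx ->
  invmx (A *m B) = invmx B *m invmx A.
Proof.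
move=> uA uB.
have uAB : A *m B \in unitmx by rewrite unitmx_mul uA.
have h : A *m B *m (invmx B *m invmx A) = 1%:M.
  by rewrite mulmxA (mulmxK uB) (mulmxV uA).
by rewrite -[LHS]mulmx1 -h mulmxA (mulVmx uAB) mul1mx.
Qed.

Definition qf n (v : 'cV[C]_n) (A : 'M[C]_n) := (ctmx v *m A *m v) 0 0.

Lemma qfE n (v : 'cV[C]_n) M : (ctmx v *m M *m v) 0 0 = qf v M.
Proof. by []. Qed.

Lemma qf_conj n (v : 'cV[C]_n) A : (qf v A)^* = qf v (ctmx A).
Proof.
rewrite /qf.
have -> : ctmx v *m ctmx A *m v = ctmx (ctmx v *m A *m v) by rewrite !ctmxM ctmxK mulmxA.
by rewrite {2}/ctmx !mxE.
Qed.

Lemma qfD n (v : 'cV[C]_n) A B : qf v (A + B) = qf v A + qf v B.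
Proof. by rewrite /qf mulmxDr mulmxDl mxE. Qed.
Lemma qfN n (v : 'cV[C]_n) A : qf v (- A) = - qf v A.
Proof. by rewrite /qf mulmxN mulNmx mxE. Qed.
Lemma qfB n (v : 'cV[C]_n) A B : qf v (A - B) = qf v A - qf v B.
Proof. by rewrite qfD qfN. Qed.
Lemma qfZ n (v : 'cV[C]_n) a A : qf v (a *: A) = a * qf v A.
Proof. by rewrite /qf -scalemxAr -scalemxAl mxE. Qed.
Lemma qfM n (v : 'cV[C]_n) (X A : 'M[C]_n) : qf v (ctmx X *m A *m X) = qf (X *m v) A.
Proof. by rewrite /qf ctmxM !mulmxA. Qed.
Lemma qf0 n (A : 'M[C]_n) : qf 0 A = 0.
Proof. by rewrite /qf mulmx0 mxE. Qed.

Lemma herm_ct n (A X : 'M[C]_n) : hermitianmx A -> hermitianmx (ctmx X *m A *m X).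
Proof. by rewrite /hermitianmx => hA; rewrite !ctmxM ctmxK hA mulmxA. Qed.

Lemma psd_congr n (A X : 'M[C]_n) : psdmx A -> psdmx (ctmx X *m A *m X).
Proof. case=> hA pA; split; [exact: herm_ct | move=> v; have := qfM v X A; rewrite /qf => ->; exact: pA]. Qed.

Lemma psd_add n (A B : 'M[C]_n) : psdmx A -> psdmx B -> psdmx (A + B).
Proof.
case=> hA pA [hB pB]; split; first by rewrite /hermitianmx ctmxD hA hB.
move=> v; have := qfD v A B; rewrite /qf => ->; exact: addr_ge0.
Qed.

Lemma psd_scale n (A : 'M[C]_n) c : 0 <= c -> psdmx A -> psdmx (c *: A).
Proof.
move=> c0 [hA pA]; split; first by rewrite /hermitianmx ctmxZ hA geC0_conj.
move=> v; have := qfZ v c A; rewrite /qf => ->; exact: mulr_ge0.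
Qed.

Lemma posdef_psd n (A : 'M[C]_n) : posdefmx A -> psdmx A.
Proof.
case=> hA pA; split=> // v; have [->|v0] := eqVneq v 0.
  by have := qf0 A; rewrite /qf => ->.
exact/ltW/pA.
Qed.

Lemma posdef_congr n (A X : 'M[C]_n) : posdefmx A -> X \in unitmx ->
  posdefmx (ctmx X *m A *m X).
Proof.
case=> hA pA uX; split; first exact: herm_ct.
move=> v v0; have := qfM v X A; rewrite /qf => ->; apply: pA.
apply: contra v0 => /eqP Xv; apply/eqP.
by rewrite -(mulKmx uX v) Xv mulmx0.
Qed.

Lemma herm_inv n (A : 'M[C]_n) : hermitianmx A -> hermitianmx (invmx A).
Proof. by rewrite /hermitianmx ctmxV => ->. Qed.

Lemma unitmx_inj n (A : 'M[C]_n) :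
  (forall v : 'cV[C]_n, v != 0 -> A *m v != 0) -> A \in unitmx.
Proof.
move=> inj; rewrite unitmxE unitfE; apply/negP => d0.
have : \det A^T == 0 by rewrite det_tr.
case/det0P => v v0 vA.
have := inj v^T; rewrite trmx_eq0 v0 => /(_ isT).
by rewrite -[A]trmxK -trmx_mul vA trmx0 eqxx.
Qed.


Lemma zl (V : zmodType) (x q p : V) : p - q = (x - q - (q - p)) + (q - x).
Proof. by rewrite [RHS]addrC !addrA subrK subrr add0r opprB. Qed.

Lemma antitone n (P Q : 'M[C]_n) : hermitianmx P -> hermitianmx Q ->
  P \in unitmx -> Q \in unitmx -> psdmx P -> psdmx (Q - P) ->
  psdmx (invmx P - invmx Q).
Proof.
move=> hP hQ uP uQ pP pQP.
have hD : ctmx (invmx Q - invmx P) = invmx Q - invmx P.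
  by rewrite ctmxB !ctmxV hP hQ.
have hQi : ctmx (invmx Q) = invmx Q by rewrite ctmxV hQ.
have e : invmx P - invmx Q = ctmx (invmx Q - invmx P) *m P *m (invmx Q - invmx P)
   + ctmx (invmx Q) *m (Q - P) *m invmx Q.
  rewrite hD hQi mulmxBl (mulVmx uP) mulmxBl !mulmxBr (mulmxK uP) mul1mx.
  rewrite (mulVmx uQ) mulmxBl !mul1mx.
  exact: zl.
rewrite e; apply: psd_add; exact: psd_congr.
Qed.

Lemma unit_of_posdef n (X : 'M[C]_n) : posdefmx (2^-1 *: (X + ctmx X)) -> X \in unitmx.
Proof.
case=> _ pH; apply: unitmx_inj => v v0; apply/negP => /eqP Xv.
have q1 : qf v X = 0 by rewrite /qf -mulmxA Xv mulmx0 mxE.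
have q2 : qf v (ctmx X) = 0 by rewrite -qf_conj q1 conjC0.
have := pH v v0; rewrite -[(_ *m _ *m _) 0 0]/(qf v _).
by rewrite qfZ qfD q1 q2 addr0 mulr0 ltxx.
Qed.

Lemma MX n (X : 'M[C]_n) : X \in unitmx ->
  2^-1 *: (invmx X + invmx (ctmx X)) = invmx X *m (2^-1 *: (X + ctmx X)) *m invmx (ctmx X).
Proof.
move=> uX; have uK : ctmx X \in unitmx by rewrite unitmx_ct.
rewrite -scalemxAr -scalemxAl; congr (_ *: _).
by rewrite mulmxDr (mulVmx uX) mulmxDl mul1mx (mulmxK uK) addrC.
Qed.

Lemma MX' n (X : 'M[C]_n) : X \in unitmx -> (2^-1 *: (X + ctmx X)) \in unitmx ->
  2^-1 *: (invmx X + invmx (ctmx X)) = invmx (ctmx X *m invmx (2^-1 *: (X + ctmx X)) *m X).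
Proof.
move=> uX uH; have uK : ctmx X \in unitmx by rewrite unitmx_ct.
rewrite MX // invmxM ?unitmx_mul ?uK ?unitmx_inv // invmxM ?unitmx_inv // invmxK.
by rewrite mulmxA.
Qed.

Lemma eXl n (H A B : 'M[C]_n) c : H \in unitmx ->
  H *m (invmx H - c *: (A + B)) *m H = H - c *: (H *m A *m H + H *m B *m H).
Proof.
move=> uH; rewrite mulmxBr mulmxBl (mulmxKV uH) -scalemxAr -scalemxAl.
by rewrite mulmxDr mulmxDl.
Qed.

Lemma E1l n (X K : 'M[C]_n) c : X \in unitmx ->
  (c *: (X + K)) *m invmx X *m (c *: (X + K)) = (c * c) *: (X + K + (K + K *m invmx X *m K)).
Proof.
move=> uX; rewrite -scalemxAr -!scalemxAl scalerA; congr (_ *: _).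
by rewrite mulmxDl (mulmxV uX) mulmxDl mul1mx mulmxDr (mulmxKV uX).
Qed.
End Infra.

Lemma half_twice (C : numClosedFieldType) n (M : 'M[C]_n) : 2^-1 *: (M + M) = M.
Proof.
by rewrite -mulr2n -scaler_nat scalerA mulVf ?pnatr_eq0 // scale1r.
Qed.

Unset Implicit Arguments.

Theorem lemma5p26 (C : numClosedFieldType) (n : nat) (R : 'M[C]_n) :
  posdefmx (2^-1 *: (R + ctmx R)) ->
  let Rt := 2^-1 *: (R + ctmx R) in
  let Rb := 2^-1 *: (R - ctmx R) in
  let W := fun a : C => Rt + a *: Rb in
  [/\ R \in unitmx,
      posdefmx (2^-1 *: (invmx R + invmx (ctmx R))),
      loewner_ge (invmx Rt) (2^-1 *: (invmx R + invmx (ctmx R))),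
      loewner_ge Rt
        (2^-1 *: (ctmx R *m invmx R *m ctmx R + R *m invmx (ctmx R) *m R))
    & forall a b : C, a \is Num.real -> b \is Num.real ->
        -1 <= a <= 1 -> -1 <= b <= 1 -> `|a| <= `|b| ->
        loewner_ge (2^-1 *: (invmx (W a) + invmx (ctmx (W a))))
                   (2^-1 *: (invmx (W b) + invmx (ctmx (W b))))].
Proof.
move=> hpos; cbv beta zeta.
set Rt : 'M[C]_n := 2^-1 *: (R + ctmx R).
set Rb : 'M[C]_n := 2^-1 *: (R - ctmx R).
pose W := fun a : C => Rt + a *: Rb.
have hH : ctmx Rt = Rt := hpos.1.
have c2 : (2^-1 : C)^* = 2^-1 by rewrite geC0_conj // invr_ge0 ler0n.
have hS : ctmx Rb = - Rb by rewrite /Rb ctmxZ c2 ctmxB ctmxK -scalerN opprB.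
have eR : Rt + Rb = R.
  by rewrite /Rt /Rb -scalerDr addrACA subrr addr0 half_twice.
have cW a : a \is Num.real -> ctmx (W a) = Rt - a *: Rb.
  by move=> ra; rewrite /W ctmxD ctmxZ hH hS conj_Creal // scalerN.
have WH a : a \is Num.real -> 2^-1 *: (W a + ctmx (W a)) = Rt.
  by move=> ra; rewrite cW // /W addrACA subrr addr0 half_twice.
have uW a : a \is Num.real -> W a \in unitmx.
  by move=> ra; apply: unit_of_posdef; rewrite WH.
have W0 : W 0 = Rt by rewrite /W scale0r addr0.
have W1 : W 1 = R by rewrite /W scale1r.
have uH : Rt \in unitmx by rewrite -W0; apply: uW; exact: real0.
have uR : R \in unitmx := unit_of_posdef hpos.
have pHi : psdmx (invmx Rt).
  have -> : invmx Rt = ctmx (invmx Rt) *m Rt *m invmx Rt.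
    by rewrite ctmxV hH (mulVmx uH) mul1mx.
  exact/psd_congr/posdef_psd.
have hHi : hermitianmx (invmx Rt) by exact: herm_inv.
have h5 : forall a b : C, a \is Num.real -> b \is Num.real ->
        `|a| <= `|b| ->
        loewner_ge (2^-1 *: (invmx (W a) + invmx (ctmx (W a))))
                   (2^-1 *: (invmx (W b) + invmx (ctmx (W b)))).
  move=> a b ra rb ab.
  rewrite (MX' (uW a ra)); last by rewrite WH.
  rewrite (MX' (uW b rb)); last by rewrite WH.
  rewrite !WH //.
  have PE c : c \is Num.real -> ctmx (W c) *m invmx Rt *m W c
      = Rt + (c * c) *: (ctmx Rb *m invmx Rt *m Rb).
    move=> rc; rewrite cW // /W mulmxBl (mulmxV uH) -scalemxAl mulmxBl mul1mx.
    rewrite -scalemxAl mulmxDr (mulmxKV uH) -scalemxAr scalerDr.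
    by rewrite hS !mulNmx scalerN opprD addrA addrK [c *: (c *: _)]scalerA.
  apply: antitone.
  - exact: herm_ct.
  - exact: herm_ct.
  - by rewrite !unitmx_mul unitmx_ct uW // unitmx_inv uH.
  - by rewrite !unitmx_mul unitmx_ct uW // unitmx_inv uH.
  - exact: psd_congr.
  rewrite !PE // opprD addrACA subrr add0r -scalerBl.
  apply: psd_scale; last exact: psd_congr.
  have := ler_pM (normr_ge0 a) (normr_ge0 a) ab ab.
  by rewrite -!expr2 !real_normK // subr_ge0.
have h3 : loewner_ge (invmx Rt) (2^-1 *: (invmx R + invmx (ctmx R))).
  have := h5 0 1 (real0 _) (real1 _); rewrite normr0 normr1 ler01 => /(_ isT).
  by rewrite W0 W1 hH half_twice.
have uK : ctmx R \in unitmx by rewrite unitmx_ct.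
split => //.
- rewrite (MX uR).
  have -> : invmx R = ctmx (invmx (ctmx R)) by rewrite ctmxV ctmxK.
  by apply: posdef_congr hpos _; rewrite unitmx_inv.
- have pX := psd_congr Rt h3.
  split.
    rewrite /hermitianmx ctmxB hH ctmxZ c2 ctmxD !ctmxM !ctmxV !ctmxK !mulmxA.
    by rewrite [X in 2^-1 *: X]addrC.
  move=> v; have hv := pX.2 v.
  rewrite !qfE in hv *.
  rewrite hH eXl // !qfB !qfZ !qfD in hv.
  rewrite !qfB !qfZ !qfD.
  have E1 : Rt *m invmx R *m Rt = (2^-1*2^-1) *: (R + ctmx R + (ctmx R + ctmx R *m invmx R *m ctmx R)).
    exact: E1l.
  have E2 : Rt *m invmx (ctmx R) *m Rt = (2^-1*2^-1) *: (ctmx R + R + (R + R *m invmx (ctmx R) *m R)).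
    rewrite /Rt [R + _]addrC; exact: E1l.
  rewrite E1 E2 !qfZ !qfD in hv.
  have e : forall x y : C, y = 4 * x -> 0 <= x -> 0 <= y.
    by move=> x y -> x0; rewrite mulr_ge0 // ler0n.
  apply: (e _ _ _ hv).
  have t0 : (2 : C) != 0 by rewrite pnatr_eq0.
  field.
  done.
- by move=> a b ra rb _ _; exact: h5.
Qed.
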